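(* Let \[U_1:=\left\{(a,b)\in\bigl([0,1/2)\times[1/2,1)\bigr)\cup\bigl([1/2,1)\times[0,1/2)\bigr):\ a+b<\tfrac34\right\}.\] Let $x,z\in U_1$ and let $y^*=\frac{x+z}{2}$. Then \[(1-\{x_1\})^2+(1-\{z_1\})^2-2(1-\{y^*_1\})^2\ge 2\left(\frac{z_1-x_1}{2}\right)^2.\]
   Context: For $x\in[0,1)$, $\{x\}:=x$ if $x\in[0,1/2)$ and $\{x\}:=x-1/2$ otherwise (this is not the usual fractional part). Subscripts denote coordinates of points in $\mathbb{R}^2$. *)

(* Defs.v *)
From Stdlib Require Import Reals Lra.
Open Scope R_scope.

(* The paper's modified "fractional part" on [0,1):
   {x} = x if x in [0,1/2), and x - 1/2 otherwise (intended for x in [0,1)). *)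
Definition hfrac (x : R) : R := if Rlt_dec x (1/2) then x else x - 1/2.

Definition U1 (p : R * R) : Prop :=
  let a := fst p in let b := snd p in
  ((0 <= a < 1/2 /\ 1/2 <= b < 1) \/ (1/2 <= a < 1 /\ 0 <= b < 1/2))
  /\ a + b < 3/4.

(* Main.v *)
Require Import Defs.
From Stdlib Require Import Reals Lra Psatz.
Open Scope R_scope.

Theorem lemma4p3 (x z : R * R) (hx : U1 x) (hz : U1 z) :
  let ystar := ((fst x + fst z) / 2, (snd x + snd z) / 2) in
  (1 - hfrac (fst x)) ^ 2 + (1 - hfrac (fst z)) ^ 2
    - 2 * (1 - hfrac (fst ystar)) ^ 2
  >= 2 * ((fst z - fst x) / 2) ^ 2.
Proof.
  destruct x as [a b], z as [c d]; unfold U1 in *; simpl in *.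
  unfold hfrac.
  destruct (Rlt_dec a (1/2)), (Rlt_dec c (1/2)), (Rlt_dec ((a+c)/2) (1/2));
  nra.
Qed.
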